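(* Assume (H1), (H2). Let $L\in\mathbb R$ and $\lambda_\infty>\|f'\circ\varphi\|_{L^\infty}$. Then for every $s\in(-\infty,L]$, $\mathbb E^u_-(s,\lambda_\infty)\cap\ell_*^{sand}=\{0\}$; consequently the Maslov index of $s\mapsto\mathbb E^u_-(s,\lambda_\infty)$, $s\in[-\infty,L]$, with respect to $\ell_*^{sand}$ is zero.
   Context: Fix real $\nu,\mu$ and $f(u)=\nu u^2-u^3-\mu u$. (H1): $\varphi$ is a smooth stationary solution of $u_t=-(1+\partial_x^2)^2u+f(u)$ with $\varphi(x)\to0$ as $x\to\pm\infty$. (H2): $f'(0)<0$. $B(x,\lambda)=\begin{pmatrix}0&0&0&1\\0&0&1&-2\\-\lambda-1+f'(\varphi(x))&0&0&0\\0&1&0&0\end{pmatrix}$ is the coefficient matrix of the first-order form of $(-\partial_x^4-2\partial_x^2-1+f'(\varphi))u=\lambda u$ in the variables $q=(u,u_{xx},u_{xxx}+2u_x,u_x)$. $\mathbb E^u_-(x,\lambda)$ is the set of values $q(x)$ of solutions of $q'=B(y,\lambda)q$ with $q(y)\to0$ as $y\to-\infty$; at $x=-\infty$ it is defined as the unstable spectral subspace of $B_\infty(\lambda)=\lim_{x\to\pm\infty}B(x,\lambda)$. $\ell_*^{sand}=\{q\in\mathbb R^4:q_1=q_4=0\}$. The Maslov index is the signed count of crossings of the path with the reference plane. *)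

(* Defs.v *)
From HB Require Import structures.
From mathcomp Require Import all_boot all_order all_algebra.
From mathcomp Require Import all_classical all_reals all_analysis.
Set Implicit Arguments. Unset Strict Implicit. Unset Printing Implicit Defensive.
Import Order.TTheory GRing.Theory Num.Theory.
Import numFieldNormedType.Exports.
Local Open Scope classical_set_scope.
Local Open Scope ring_scope.

Section Defs.
Variable R : realType.

Definition fSH (nu mu u : R) : R := nu * u ^+ 2 - u ^+ 3 - mu * u.
Definition dfSH (nu mu u : R) : R := 2 * nu * u - 3 * u ^+ 2 - mu.

(* B with the entry f'(phi(x)) replaced by the number c *)
Definition Bmx (c lam : R) : 'M[R]_4 :=
  \matrix_(i < 4, j < 4)
    match nat_of_ord i, nat_of_ord j with
    | 0%N, 3%N => 1
    | 1%N, 2%N => 1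
    | 1%N, 3%N => -2
    | 2%N, 0%N => - lam - 1 + c
    | 3%N, 1%N => 1
    | _, _ => 0
    end.

Definition B (nu mu : R) (phi : R -> R) (x lam : R) : 'M[R]_4 :=
  Bmx (dfSH nu mu (phi x)) lam.

(* B_infty(lambda) = lim_{x -> +-oo} B(x,lambda), with phi -> 0 *)
Definition Binf (nu mu lam : R) : 'M[R]_4 := Bmx (dfSH nu mu 0) lam.

(* smooth stationary solution of u_t = -(1+d_x^2)^2 u + f(u):
   phi has derivatives of all orders d n (d 0 = phi, (d n)' = d n.+1) and
   -(phi'''' + 2 phi'' + phi) + f(phi) = 0 *)
Definition smooth_stationary (nu mu : R) (phi : R -> R) : Prop :=
  exists d : nat -> R -> R,
    d 0%N = phi /\
    (forall (n : nat) (x : R), is_derive x (1 : R) (d n) (d n.+1 x)) /\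
    (forall x, - (d 4%N x + 2 * d 2%N x + d 0%N x) + fSH nu mu (d 0%N x) = 0).

Definition Eu_minus (nu mu : R) (phi : R -> R) (x lam : R) : set 'cV[R]_4 :=
  [set v | exists q : R -> 'cV[R]_4,
     (forall y : R, is_derive y (1 : R) q (B nu mu phi y lam *m q y)) /\
     (q y @[y --> -oo] --> (0 : 'cV[R]_4)) /\ q x = v].

(* Real unstable spectral subspace of a real 4x4 matrix A: the real part of
   the sum of the generalized eigenspaces for eigenvalues a +- ib with a > 0;
   the (real) generalized eigenspace of the pair a +- ib is
   ker (A^2 - 2a A + (a^2+b^2))^4 (b = 0 covers real eigenvalues). *)
Definition unstable_subspace (A : 'M[R]_4) : set 'cV[R]_4 :=
  [set v | exists s : seq (R * R * 'cV[R]_4),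
     (forall t, t \in s -> 0 < t.1.1 /\
        (A ^+ 2 - (2 * t.1.1) *: A + (t.1.1 ^+ 2 + t.1.2 ^+ 2)%:M) ^+ 4 *m t.2 = 0)
     /\ v = \sum_(t <- s) t.2].

Definition Eu_minus_ext (nu mu : R) (phi : R -> R) (s : \bar R) (lam : R)
  : set 'cV[R]_4 :=
  match s with
  | EFin r => Eu_minus nu mu phi r lam
  | -oo%E => unstable_subspace (Binf nu mu lam)
  | +oo%E => set0
  end.

Definition ell_sand : set 'cV[R]_4 :=
  [set q | q ord0 ord0 = 0 /\ q (inord 3) ord0 = 0].

Definition sup_norm (g : R -> R) : \bar R :=
  ereal_sup [set (`| g x |)%:E | x in setT].

End Defs.

(* Main.v *)
Require Import Defs.
From HB Require Import structures.
From mathcomp Require Import all_boot all_order all_algebra.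
From mathcomp Require Import all_classical all_reals all_analysis.
From mathcomp Require Import ring lra.
Import Order.TTheory GRing.Theory Num.Theory.
Import numFieldNormedType.Exports.
Local Open Scope classical_set_scope.
Local Open Scope ring_scope.

Section S.
Variable R : realType.
Definition cp (w : 'cV[R]_4) (k : nat) : R := w (inord k) ord0.

Lemma I0 : inord 0 = ord0 :> 'I_4. Proof. by apply/val_inj; rewrite /= inordK. Qed.
Lemma I1 : inord 1 = lift ord0 ord0 :> 'I_4. Proof. by apply/val_inj; rewrite /= inordK. Qed.
Lemma I2 : inord 2 = lift ord0 (lift ord0 ord0) :> 'I_4. Proof. by apply/val_inj; rewrite /= inordK. Qed.
Lemma I3 : inord 3 = lift ord0 (lift ord0 (lift ord0 ord0)) :> 'I_4. Proof. by apply/val_inj; rewrite /= inordK. Qed.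

Ltac cpsimpl := rewrite /cp ?I0 ?I1 ?I2 ?I3 !mxE ?big_ord_recl ?big_ord0 ?mxE /=.

Lemma mulB0 c l (w : 'cV[R]_4) : cp (Bmx c l *m w) 0 = cp w 3.
Proof. cpsimpl. ring. Qed.
Lemma mulB1 c l (w : 'cV[R]_4) : cp (Bmx c l *m w) 1 = cp w 2 - 2 * cp w 3.
Proof. cpsimpl. ring. Qed.
Lemma mulB2 c l (w : 'cV[R]_4) : cp (Bmx c l *m w) 2 = (- l - 1 + c) * cp w 0.
Proof. cpsimpl. ring. Qed.
Lemma mulB3 c l (w : 'cV[R]_4) : cp (Bmx c l *m w) 3 = cp w 1.
Proof. cpsimpl. ring. Qed.
Lemma cpD (v w : 'cV[R]_4) k : cp (v + w) k = cp v k + cp w k.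
Proof. by rewrite /cp mxE. Qed.
Lemma cpN (v : 'cV[R]_4) k : cp (- v) k = - cp v k.
Proof. by rewrite /cp mxE. Qed.
Lemma cpZ a (v : 'cV[R]_4) k : cp (a *: v) k = a * cp v k.
Proof. by rewrite /cp mxE. Qed.
Lemma cp0 k : cp (0 : 'cV[R]_4) k = 0.
Proof. by rewrite /cp mxE. Qed.
Lemma cp_eq0 (v : 'cV[R]_4) : cp v 0 = 0 -> cp v 1 = 0 -> cp v 2 = 0 -> cp v 3 = 0 -> v = 0.
Proof.
rewrite /cp ?I0 ?I1 ?I2 ?I3 => h0 h1 h2 h3; apply/matrixP => i j.
rewrite (ord1 j) mxE; case: i => -[|[|[|[|//]]]] p.
- by rewrite -h0; congr (v _ _); apply/val_inj.
- by rewrite -h1; congr (v _ _); apply/val_inj.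
- by rewrite -h2; congr (v _ _); apply/val_inj.
- by rewrite -h3; congr (v _ _); apply/val_inj.
Qed.
Lemma sq_mul (A : 'M[R]_4) (w : 'cV[R]_4) : A ^+ 2 *m w = A *m (A *m w).
Proof. by rewrite expr2 -mulmxA. Qed.

Lemma sAl m n p a (A : 'M[R]_(m, n)) (B : 'M[R]_(n, p)) : (a *: A) *m B = a *: (A *m B).
Proof. by rewrite scalemxAl. Qed.

Ltac vsimp := rewrite ?(mulmxDl, mulmxBl, mulmxDr, mulmxBr, sq_mul, mul_scalar_mx,
   scalemxAr, mulNmx, mulmxN, sAl, mulmx0);
   rewrite ?(cpD, cpN, cpZ, cp0, mulB0, mulB1, mulB2, mulB3).

Lemma key1 c l al (r := 2 * al ^+ 2 + 1) (hc : - l - 1 + c = - r ^+ 2) (w : 'cV[R]_4) :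
  let A := Bmx c l in
  (A ^+ 2 - (2 * al) *: A + r%:M) *m ((A ^+ 2 + (2 * al) *: A + r%:M) *m w) = 0.
Proof.
move=> A; rewrite /A.
apply: cp_eq0; vsimp; rewrite ?hc /r; ring.
Qed.

Lemma pow4_split (T : comRingType) (x y z w : T) :
  (x * y + z * w) ^+ 4 = x ^+ 4 * y ^+ 4 +
    w * (z * (4%:R * (x * y) ^+ 3 + 6%:R * (x * y) ^+ 2 * (z * w)
          + 4%:R * (x * y) * (z * w) ^+ 2 + (z * w) ^+ 3)).
Proof. ring. Qed.

Lemma mulM (X Y : 'M[R]_4) (w : 'cV[R]_4) : (X * Y) *m w = X *m (Y *m w).
Proof. by rewrite -mulmxA. Qed.

Lemma hx_quad (A : 'M[R]_4) (x y : R) :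
  horner_mx A ('X ^+ 2 + x%:P * 'X + y%:P) = A ^+ 2 + x *: A + y%:M.
Proof.
rewrite !rmorphD !rmorphM /= !horner_mx_X !horner_mx_C -expr2.
by have -> : x%:M * A = x *: A by apply: mul_scalar_mx.
Qed.

Lemma gen_kernel c l al (r := 2 * al ^+ 2 + 1) (hc : - l - 1 + c = - r ^+ 2)
  (hal : 0 < al) (a b : R) (ha : 0 < a) (w : 'cV[R]_4) :
  let A := Bmx c l in
  (A ^+ 2 - (2 * a) *: A + (a ^+ 2 + b ^+ 2)%:M) ^+ 4 *m w = 0 ->
  (A ^+ 2 - (2 * al) *: A + r%:M) *m w = 0.
Proof.
move=> A hw.
pose pT : {poly R} := 'X ^+ 2 + (- (2 * a))%:P * 'X + (a ^+ 2 + b ^+ 2)%:P.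
pose pM : {poly R} := 'X ^+ 2 + (2 * al)%:P * 'X + r%:P.
pose p1 := - (2 * a); pose p0 := a ^+ 2 + b ^+ 2; pose q1 := 2 * al; pose q0 := r.
pose d1 := p1 - q1; pose d0 := p0 - q0.
pose u : {poly R} := (- d1)%:P * 'X + (d0 - d1 * q1)%:P.
pose v : {poly R} := d1%:P * 'X + (d1 ^+ 2 + d1 * q1 - d0)%:P.
pose Res := d0 ^+ 2 - d1 * d0 * q1 + d1 ^+ 2 * q0.
have Bez : u * pT + v * pM = Res%:P.
  rewrite /u /v /pT /pM /Res /d1 /d0 /p1 /p0 /q1 /q0; ring.
have ResE : Res = ((a + al) ^+ 2 - b ^+ 2 + (r - al ^+ 2)) ^+ 2 + 4 * (a + al) ^+ 2 * b ^+ 2.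
  rewrite /Res /d1 /d0 /p1 /p0 /q1 /q0 /r; ring.
have Res0 : Res != 0.
  rewrite ResE; apply/lt0r_neq0.
  have hs : 0 < a + al by lra.
  have [->|b0] := eqVneq b 0.
    rewrite expr0n /= subr0 mulr0 addr0 /r; apply: exprn_gt0; nra.
  have hb : 0 < b ^+ 2 by rewrite exprn_even_gt0.
  apply: ltr_wpDl; first exact: sqr_ge0.
  by apply: mulr_gt0 => //; apply: mulr_gt0 => //; apply: exprn_gt0.
have E := @pow4_split _ u pT v pM; rewrite Bez -rmorphXn /= in E.
have hT : horner_mx A pT = A ^+ 2 - (2 * a) *: A + (a ^+ 2 + b ^+ 2)%:M.
  by rewrite hx_quad scaleNr.
have hM : horner_mx A pM = A ^+ 2 + (2 * al) *: A + r%:M by rewrite hx_quad.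
set G := (X in pM * X) in E.
have Ew : Res ^+ 4 *: w = horner_mx A pM *m (horner_mx A G *m w).
  rewrite -mul_scalar_mx -(horner_mx_C A) E rmorphD mulmxDl.
  rewrite (rmorphM _ (u ^+ 4)) (rmorphM _ pM) (rmorphXn _ 4 pT) /= hT mulM hw mulmx0 add0r mulM //.
have -> : w = (Res ^+ 4)^-1 *: (Res ^+ 4 *: w).
  by rewrite scalerA mulVf ?scale1r // expf_neq0.
rewrite Ew -scalemxAr.
have K : (A ^+ 2 - (2 * al) *: A + r%:M) *m (horner_mx A pM *m (horner_mx A G *m w)) = 0.
  by rewrite hM; exact: (@key1 c l al hc).
by rewrite K scaler0.
Qed.

Lemma unstable_triv c l (hm : c < l) v :
  unstable_subspace (Bmx c l) v -> cp v 0 = 0 -> cp v 3 = 0 -> v = 0.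
Proof.
set m := 1 + l - c.
have m1 : 1 < m by rewrite /m; lra.
set r := Num.sqrt m.
have r0 : 0 <= r by apply: sqrtr_ge0.
have r2 : r ^+ 2 = m by rewrite sqr_sqrtr //; lra.
have r1 : 1 < r by nra.
set al := Num.sqrt ((r - 1) / 2).
have al2 : al ^+ 2 = (r - 1) / 2 by rewrite sqr_sqrtr //; lra.
have al0 : 0 < al by rewrite sqrtr_gt0; lra.
have rE : 2 * al ^+ 2 + 1 = r by rewrite al2; field.
have hc : - l - 1 + c = - (2 * al ^+ 2 + 1) ^+ 2 by rewrite rE r2 /m; ring.
move=> [s [hs ->]] h0 h3.
set A := Bmx c l.
have P0 : (A ^+ 2 - (2 * al) *: A + (2 * al ^+ 2 + 1)%:M) *m (\sum_(t <- s) t.2) = 0.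
  rewrite mulmx_sumr big1_seq // => t /andP[_ ts].
  have [ha hk] := hs t ts.
  exact: (@gen_kernel c l al hc al0 _ t.1.2 ha).
move: h0 h3 P0; set w := \sum_(t <- s) t.2 => h0 h3 P0.
have e0 := congr1 (cp ^~ 0) P0; have e2 := congr1 (cp ^~ 2) P0.
move: e0 e2; rewrite /A; vsimp; rewrite h0 h3 => e0 e2.
apply: cp_eq0 => //.
  by rewrite -e0; ring.
have : (2 * al ^+ 2 + 1) * cp w 2 = 0 by rewrite -e2; ring.
by move/eqP; rewrite mulf_eq0 => /orP[/eqP|/eqP //]; rewrite rE; lra.
Qed.

Definition Qk (q : R -> 'cV[R]_4) k := fun z => cp (q z) k.

Lemma comp_derive {q : R -> 'cV[R]_4} {y D} k :
  is_derive y (1 : R) q D -> is_derive y (1 : R) (Qk q k) (cp D k).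
Proof.
move=> [dq <-]; rewrite /cp derive_mx // mxE; apply: derivableP.
by move/derivable_mxP: dq; apply.
Qed.

Lemma cvg_entry {T} {F : set_system T} {FF : Filter F} {f : T -> 'cV[R]_4} k :
  f @ F --> (0 : 'cV[R]_4) -> (fun x => cp (f x) k) @ F --> (0 : R).
Proof.
move=> /cvgrPdist_le fM; apply/cvgrPdist_le => e e0.
move: (fM e e0); apply: filterS => x hx; apply: le_trans hx.
rewrite [leRHS]/Num.Def.normr /= mx_normrE.
apply: le_trans; last exact: (le_bigmax _ _ (inord k, ord0)).
by rewrite /cp !mxE.
Qed.

Lemma dval {a : R} {f : R -> R} {df : R} : is_derive a (1 : R) f df -> 'D_1 f a = df.
Proof. by move=> h; exact: (@derive_val _ _ _ _ _ _ _ h). Qed.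

Lemma zero_near_deriv {f : R -> R} {x d} :
  (\forall y \near x, f y = 0) -> is_derive x (1 : R) f d -> d = 0.
Proof.
move=> hn hd.
have h2 : is_derive x (1 : R) (cst (0 : R)) d.
  by apply: (near_eq_is_derive _ hd); apply: filterS hn => y ->.
by rewrite -(dval h2) -[RHS](dval (is_derive_cst 0 x 1)).
Qed.

Lemma finite_case nu mu phi lam s (q : R -> 'cV[R]_4)
  (hq : forall y, is_derive y (1 : R) q (B nu mu phi y lam *m q y))
  (hlim : q y @[y --> -oo] --> (0 : 'cV[R]_4))
  (hc : forall x, dfSH nu mu (phi x) < lam) :
  cp (q s) 0 = 0 -> cp (q s) 3 = 0 -> q s = 0.
Proof.
move=> hs0 hs3.
set c := fun x => dfSH nu mu (phi x).
have d0 x : is_derive x (1 : R) (Qk q 0) (Qk q 3 x).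
  by have := comp_derive 0 (hq x); rewrite /B mulB0.
have d1 x : is_derive x (1 : R) (Qk q 1) (Qk q 2 x - 2 * Qk q 3 x).
  by have := comp_derive 1 (hq x); rewrite /B mulB1.
have d2 x : is_derive x (1 : R) (Qk q 2) ((- lam - 1 + c x) * Qk q 0 x).
  by have := comp_derive 2 (hq x); rewrite /B mulB2.
have d3 x : is_derive x (1 : R) (Qk q 3) (Qk q 1 x).
  by have := comp_derive 3 (hq x); rewrite /B mulB3.
pose g := fun z => Qk q 1 z * Qk q 3 z - Qk q 0 z * Qk q 2 z + 2 * (Qk q 0 z * Qk q 3 z).
pose Qv := fun x => (Qk q 0 x + Qk q 1 x) ^+ 2 + (lam - c x) * Qk q 0 x ^+ 2.
have dg x : is_derive x (1 : R) g (Qv x).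
  have := is_deriveD (is_deriveB (is_deriveM (d1 x) (d3 x)) (is_deriveM (d0 x) (d2 x)))
     (is_deriveZ 2 (is_deriveM (d0 x) (d3 x))).
  move/is_derive_eq; apply; rewrite /Qv /= /GRing.scale /=; ring.
have Qv0 x : 0 <= Qv x.
  rewrite /Qv; apply: addr_ge0; first exact: sqr_ge0.
  by apply: mulr_ge0; [rewrite subr_ge0; apply/ltW/hc | exact: sqr_ge0].
have glim : g y @[y --> -oo] --> (0 : R).
  have h (k : nat) : Qk q k y @[y --> -oo] --> (0 : R) by exact: cvg_entry.
  rewrite (_ : (0 : R) = 0 * 0 - 0 * 0 + 2 * (0 * 0)); last by rewrite !mulr0 subr0 addr0.
  rewrite /g; apply: cvgD; first (apply: cvgB; apply: cvgM; exact: h).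
  apply: cvgM; first exact: cvg_cst.
  apply: cvgM; exact: h.
have mono x y : x <= y -> y <= s -> g x <= g y.
  apply: ger0_derive1_ndecrNy.
  - by move=> z _; case: (dg z).
  - by move=> z _; rewrite derive1E (dval (dg z)).
  - by apply: derivable_within_continuous => z _; case: (dg z).
have gs : g s = 0 by rewrite /g /Qk hs0 hs3; ring.
have gge x : x <= s -> 0 <= g x.
  move=> xs.
  suff : [set r : R | r <= g x] 0 by [].
  apply: (closed_cvg _ (@closed_le _ (g x)) _ _ glim).
  apply: filterS (nbhs_ninfty_le (num_real x)) => y yx; exact: mono yx xs.
have g0 x : x <= s -> g x = 0.
  by move=> xs; apply/eqP; rewrite eq_le gge // andbT -gs mono.
have QQ x : x < s -> Qk q 0 x = 0 /\ Qk q 1 x = 0.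
  move=> xs.
  have hQ : Qv x = 0.
    apply: (zero_near_deriv _ (dg x)).
    by apply: filterS (lt_nbhsl xs) => y ys; apply/g0/ltW.
  have hcx : 0 < lam - c x by rewrite subr_gt0; apply: hc.
  move: hQ; rewrite /Qv => hQ.
  have e0 : Qk q 0 x = 0.
    apply/eqP; rewrite -sqrf_eq0; apply/eqP.
    have := sqr_ge0 (Qk q 0 x + Qk q 1 x); have := sqr_ge0 (Qk q 0 x); nra.
  split => //; move: hQ; rewrite e0 expr0n /= mulr0 addr0 add0r => /eqP.
  by rewrite sqrf_eq0 => /eqP.
have QQ' x : x < s -> Qk q 2 x = 0 /\ Qk q 3 x = 0.
  move=> xs.
  have e3 : Qk q 3 x = 0.
    apply: (zero_near_deriv _ (d0 x)).
    by apply: filterS (lt_nbhsl xs) => y ys; case: (QQ y ys).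
  split => //.
  have : Qk q 2 x - 2 * Qk q 3 x = 0.
    apply: (zero_near_deriv _ (d1 x)).
    by apply: filterS (lt_nbhsl xs) => y ys; case: (QQ y ys).
  by rewrite e3 mulr0 subr0.
have ss : s - 1 < s by lra.
have cont k : {within `[s - 1, s], continuous (Qk q k)}.
  apply: derivable_within_continuous => z _.
  by case: (comp_derive k (hq z)).
have e1 : Qk q 1 s = 0.
  have [z /andP[z1 z2]] := MVT ss (fun z _ => d1 z) (cont 1%N).
  have [h2 h3] := QQ' z z2; have [_ h1] := QQ (s - 1) ss.
  by rewrite h2 h3 h1; lra.
have e2 : Qk q 2 s = 0.
  have [z /andP[z1 z2]] := MVT ss (fun z _ => d2 z) (cont 2%N).
  have [h0 _] := QQ z z2; have [h2 _] := QQ' (s - 1) ss.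
  by rewrite h0 h2; lra.
by apply: cp_eq0.
Qed.
End S.
Arguments cp {R}.

Theorem proposition3 (R : realType) (nu mu : R) (phi : R -> R)
  (H1 : smooth_stationary nu mu phi)
  (H1p : phi x @[x --> +oo] --> 0)
  (H1m : phi x @[x --> -oo] --> 0)
  (H2 : dfSH nu mu 0 < 0)
  (L lam_inf : R)
  (Hlam : (sup_norm (fun x => dfSH nu mu (phi x)) < lam_inf%:E)%E) :
  forall s : \bar R, (s <= L%:E)%E ->
    Eu_minus_ext nu mu phi s lam_inf `&` @ell_sand R = [set (0 : 'cV[R]_4)].
Proof.
move=> s hs.
have hc x : `|dfSH nu mu (phi x)| < lam_inf.
  have h : ((`|dfSH nu mu (phi x)|)%:E <= sup_norm (fun x => dfSH nu mu (phi x)))%E.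
    by apply: ereal_sup_ubound; exists x.
  by rewrite -lte_fin; exact: le_lt_trans h Hlam.
have hc' x : dfSH nu mu (phi x) < lam_inf.
  by apply: le_lt_trans (ler_norm _) (hc x).
have c0 : dfSH nu mu 0 < lam_inf.
  by apply: lt_le_trans H2 _; apply: le_trans (normr_ge0 _) (ltW (hc 0)).
apply/seteqP; split => v.
- move=> [hv [hv0 hv3]].
  have e0 : cp v 0 = 0 by rewrite /cp I0.
  have e3 : cp v 3 = 0 by [].
  move: hs hv; case: s => [r | | ] //= _.
  + case=> q [hq [hl hqv]]; rewrite -hqv.
    by apply: (@finite_case R nu mu phi lam_inf r q hq hl hc'); rewrite hqv.
  + by move=> hv; exact: (@unstable_triv R _ _ c0 v hv e0 e3).
- move=> ->; split; last by rewrite /ell_sand /= !mxE.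
  move: hs; case: s => [r | | ] //= _.
  + exists (fun _ => 0); split; last by split => //; exact: cvg_cst.
    move=> y; apply: (is_derive_eq (is_derive_cst 0 y 1)).
    by rewrite mulmx0.
  + by exists [::]; split => //; rewrite big_nil.
Qed.
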